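(* Define, for real $f<1$ and real $w$, $$G_0(w,f)=(1-f)\,y\left(\tfrac12-y\right),\qquad y=1-\frac{w}{1-f}$$ (equivalently $G_0(w,f)=\frac{1-f}{\Phi(1-\frac{w}{1-f})}$ with $\Phi(x)=\frac{1}{x(\frac12-x)}$). Then $G_0$ is concave on the region $\{(w,f): f\in[0,\frac12],\ \frac{1-f}{2}\le w\le 1-f\}$; hence for every $n\ge1$ and all $w_i,f_i$ with $f_i\in[0,\frac12]$ and $\frac{1-f_i}{2}\le w_i\le 1-f_i$ ($i=1,\dots,n$), $$\frac{G_0(w_1,f_1)+\cdots+G_0(w_n,f_n)}{n}\le G_0\!\left(\frac{w_1+\cdots+w_n}{n},\frac{f_1+\cdots+f_n}{n}\right).$$ *)

(* Defs.v *)
From HB Require Import structures.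
From mathcomp Require Import all_boot all_order all_algebra.
From mathcomp Require Import reals.
Set Implicit Arguments. Unset Strict Implicit. Unset Printing Implicit Defensive.
Import Order.TTheory GRing.Theory Num.Theory.
Local Open Scope ring_scope.

Definition G0 {R : realType} (w f : R) : R :=
  let y := 1 - w / (1 - f) in (1 - f) * y * (2^-1 - y).

Definition region {R : realType} (w f : R) : Prop :=
  0 <= f /\ f <= 2^-1 /\ (1 - f) / 2 <= w /\ w <= 1 - f.

(* Main.v *)
Require Import Defs.
From HB Require Import structures.
From mathcomp Require Import all_boot all_order all_algebra.
From mathcomp Require Import reals.
From mathcomp Require Import ring lra.
Import Order.TTheory GRing.Theory Num.Theory.
Local Open Scope ring_scope.

Section Aux.
Variable R : realType.

Lemma G0E (w f : R) : 1 - f != 0 ->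
  G0 w f = (1 - f - w) / 2 - (1 - f - w) ^+ 2 / (1 - f).
Proof. move=> h; rewrite /G0; by field. Qed.

Lemma key2 (a b x y : R) : 0 < x -> 0 < y ->
  (a + b) ^+ 2 / (x + y) <= a ^+ 2 / x + b ^+ 2 / y.
Proof.
move=> hx hy; rewrite -subr_ge0.
have -> : a ^+ 2 / x + b ^+ 2 / y - (a + b) ^+ 2 / (x + y)
   = (a * y - b * x) ^+ 2 / (x * y * (x + y)).
  field; apply/and3P; split; apply/negP => /eqP H; lra.
apply: divr_ge0; first exact: sqr_ge0.
apply: mulr_ge0; first apply: mulr_ge0; lra.
Qed.

Lemma titu n (u s : 'I_n.+1 -> R) : (forall i, 0 < s i) ->
  (\sum_i u i) ^+ 2 / (\sum_i s i) <= \sum_i (u i) ^+ 2 / s i.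
Proof.
elim: n u s => [|n IH] u s hs.
  by rewrite !big_ord1 le_refl.
rewrite (big_ord_recr n.+1 u) (big_ord_recr n.+1 s) (big_ord_recr n.+1 (fun i => u i ^+ 2 / s i)) /=.
have hS : 0 < \sum_(i < n.+1) s (widen_ord (leqnSn n.+1) i).
  rewrite big_ord_recl; apply: ltr_pwDl; first exact: hs.
  by apply: sumr_ge0 => i _; apply: ltW.
apply: le_trans; first exact: (key2 _ _ _ _ hS (hs ord_max)).
by apply: lerD => //; apply: (IH (fun i => u (widen_ord _ i)) (fun i => s (widen_ord _ i))).
Qed.

End Aux.
Arguments G0E {R w f} h.
Arguments key2 {R a b x y} hx hy.
Arguments titu {R n} u s hs.

Theorem lemma17 (R : realType) :
  (* concavity of G0 on the region *)
  (forall (w1 f1 w2 f2 t : R),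
      region w1 f1 -> region w2 f2 -> 0 <= t -> t <= 1 ->
      t * G0 w1 f1 + (1 - t) * G0 w2 f2
        <= G0 (t * w1 + (1 - t) * w2) (t * f1 + (1 - t) * f2))
  /\
  (* Jensen-type consequence *)
  (forall (n : nat) (w f : 'I_n -> R), (1 <= n)%N ->
      (forall i, region (w i) (f i)) ->
      (\sum_(i < n) G0 (w i) (f i)) / n%:R
        <= G0 ((\sum_(i < n) w i) / n%:R) ((\sum_(i < n) f i) / n%:R)).
Proof.
split.
  move=> w1 f1 w2 f2 t [h1 [h2 [h3 h4]]] [k1 [k2 [k3 k4]]] t0 t1.
  have n1 : 1 - f1 != 0 by apply/negP => /eqP H; lra.
  have n2 : 1 - f2 != 0 by apply/negP => /eqP H; lra.
  have n3 : 1 - (t * f1 + (1 - t) * f2) != 0 by apply/negP => /eqP H; nra.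
  have p3 : 0 < 1 - (t * f1 + (1 - t) * f2) by nra.
  rewrite (G0E n1) (G0E n2) (G0E n3) -subr_ge0.
  set s1 := 1 - f1; set s2 := 1 - f2; set S := 1 - (t * f1 + (1 - t) * f2).
  have -> : (S - (t * w1 + (1 - t) * w2)) / 2 -
      (S - (t * w1 + (1 - t) * w2)) ^+ 2 / S -
     (t * ((s1 - w1) / 2 - (s1 - w1) ^+ 2 / s1) +
      (1 - t) * ((s2 - w2) / 2 - (s2 - w2) ^+ 2 / s2))
    = t * (1 - t) * ((s1 - w1) * s2 - (s2 - w2) * s1) ^+ 2 / (s1 * s2 * S).
    rewrite /S /s1 /s2; field.
    by rewrite n1 n2 n3.
  apply: divr_ge0; first by apply: mulr_ge0; [apply: mulr_ge0; lra| exact: sqr_ge0].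
  rewrite /s1 /s2 /S; apply: mulr_ge0; [apply: mulr_ge0|]; lra.
case=> [//|m] w f _ hr.
set N := m.+1%:R.
have hN : 0 < N by rewrite ltr0n.
set u := fun i => 1 - f i - w i.
set s := fun i => 1 - f i.
have hs : forall i, 0 < s i by move=> i; case: (hr i) => ? [? [? ?]]; rewrite /s; lra.
set F := \sum_(i < m.+1) f i; set W := \sum_(i < m.+1) w i.
have hsum1 : \sum_(i < m.+1) (1 : R) = N by rewrite sumr_const card_ord.
have hS : \sum_i s i = N - F by rewrite /s sumrB hsum1.
have hU : \sum_i u i = N - F - W by rewrite /u !sumrB hsum1.
have hSp : 0 < N - F.
  rewrite -hS big_ord_recl; apply: ltr_pwDl; first exact: hs.
  by apply: sumr_ge0 => i _; apply: ltW.
have hT := titu u s hs.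
rewrite hS hU in hT.
set Q := \sum_i u i ^+ 2 / s i in hT.
have hL : \sum_(i < m.+1) G0 (w i) (f i) = (N - F - W) / 2 - Q.
  rewrite -hU /Q mulr_suml -sumrB; apply: eq_bigr => i _.
  rewrite G0E /u /s //; apply/negP => /eqP H; move: (hs i); rewrite /s H; lra.
have nN : N != 0 by rewrite lt0r_neq0.
have nS : N - F != 0 by rewrite lt0r_neq0.
have nS' : 1 - F / N != 0.
  have -> : 1 - F / N = (N - F) / N by field; rewrite addrC natr1 pnatr_eq0.
  by rewrite mulf_neq0 // invr_neq0.
rewrite hL G0E // -subr_ge0.
have -> : (1 - F / N - W / N) / 2 - (1 - F / N - W / N) ^+ 2 / (1 - F / N) -
   ((N - F - W) / 2 - Q) / N = (Q - (N - F - W) ^+ 2 / (N - F)) / N.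
  have -> : 1 - F / N = (N - F) / N by field; rewrite addrC natr1 pnatr_eq0.
  field; by rewrite addrC natr1 nN nS.
by apply: divr_ge0; [rewrite subr_ge0 | apply: ltW].
Qed.
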